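(* The maximum size $W_{\max}(16,9)$ among sets of mutually unbiased weighing matrices of order $16$ and weight $9$ is $15$.
   Context: A weighing matrix of order $n$ and weight $k$ is an $n\times n$ matrix $W$ with entries in $\{1,-1,0\}$ such that $WW^T=kI_n$. Two weighing matrices $W_1,W_2$ of order $n$ and weight $k$ are unbiased if $\frac{1}{\sqrt{k}}W_1W_2^T$ is also a weighing matrix of order $n$ and weight $k$; a set is mutually unbiased if any two distinct members are unbiased. $W_{\max}(n,9)$ denotes the maximum size of a set of mutually unbiased weighing matrices of order $n$ and weight $9$. *)

(* Defs.v *)
From mathcomp Require Import all_boot all_order all_algebra.
From mathcomp Require Import algC.
Unset Printing Implicit Defensive.
Import Order.TTheory GRing.Theory Num.Theory.
Local Open Scope ring_scope.

Definition weighing_matrix (n k : nat) (W : 'M[int]_n) : Prop :=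
  (forall i j, W i j = 1 \/ W i j = -1 \/ W i j = 0) /\
  W *m W^T = (k%:R)%:M.

(* The scaled matrix is computed in the algebraic complex numbers
   algC; being a weighing matrix means it is the image of an integer weighing
   matrix (entries in {1,-1,0}). *)
Definition unbiased (n k : nat) (W1 W2 : 'M[int]_n) : Prop :=
  exists V : 'M[int]_n, weighing_matrix n k V /\
    ((sqrtC (GRing.natmul (1 : algC) k))^-1 *: map_mx (fun z : int => z%:~R : algC) (W1 *m W2^T))
      = map_mx (fun z : int => z%:~R : algC) V.

Definition MUWM (n k : nat) (S : seq 'M[int]_n) : Prop :=
  uniq S /\ (forall W, W \in S -> weighing_matrix n k W) /\
  (forall W1 W2, W1 \in S -> W2 \in S -> W1 != W2 -> unbiased n k W1 W2).

Definition Wmax_is (n k m : nat) : Prop :=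
  (exists S, MUWM n k S /\ size S = m) /\
  (forall S, MUWM n k S -> (size S <= m)%N).

(* Main.v *)
Require Import Defs.
From mathcomp Require Import all_boot all_order all_algebra algC.
From mathcomp Require Import zify ring lra.
Import Order.TTheory GRing.Theory Num.Theory.
Local Open Scope ring_scope.
Set Implicit Arguments.
Unset Strict Implicit.

Notation I16 := 'I_16.
Definition S4 (f : I16 -> I16 -> I16 -> I16 -> int) : int :=
  \sum_(a < 16) \sum_(b < 16) \sum_(c < 16) \sum_(d < 16) f a b c d.

Lemma S4D f g : S4 (fun a b c d => f a b c d + g a b c d) = S4 f + S4 g.
Proof.
rewrite /S4 -big_split; apply: eq_bigr => a _; rewrite -big_split.
apply: eq_bigr => b _; rewrite -big_split; apply: eq_bigr => c _.
by rewrite -big_split.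
Qed.

Lemma S4Z k f : S4 (fun a b c d => k * f a b c d) = k * S4 f.
Proof.
rewrite /S4 mulr_sumr; apply: eq_bigr => a _; rewrite mulr_sumr.
apply: eq_bigr => b _; rewrite mulr_sumr; apply: eq_bigr => c _.
by rewrite mulr_sumr.
Qed.

Lemma S4_ext f g : (forall a b c d, f a b c d = g a b c d) -> S4 f = S4 g.
Proof.
move=> H; rewrite /S4; apply: eq_bigr => a _; apply: eq_bigr => b _.
apply: eq_bigr => c _; apply: eq_bigr => d _; exact: H.
Qed.

Lemma S4_sum (V : finType) (g : V -> I16 -> I16 -> I16 -> I16 -> int) :
  S4 (fun a b c d => \sum_(v : V) g v a b c d) = \sum_(v : V) S4 (g v).
Proof.
rewrite /S4.
under eq_bigr => a _ do under eq_bigr => b _ do under eq_bigr => c _ do rewrite exchange_big.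
under eq_bigr => a _ do under eq_bigr => b _ do rewrite exchange_big.
under eq_bigr => a _ do rewrite exchange_big.
by rewrite exchange_big.
Qed.

Lemma S4_prod (Q : I16 -> int) :
  S4 (fun a b c d => Q a * Q b * Q c * Q d) = (\sum_(a < 16) Q a) ^+ 4.
Proof.
set s := \sum_(a < 16) Q a.
rewrite /S4.
under eq_bigr => a _ do under eq_bigr => b _ do under eq_bigr => c _ do rewrite -mulr_sumr.
under eq_bigr => a _ do under eq_bigr => b _ do rewrite -mulr_suml -mulr_sumr.
under eq_bigr => a _ do rewrite -mulr_suml -mulr_suml -mulr_sumr.
by rewrite -!mulr_suml !exprS expr0 mulr1 !mulrA.
Qed.
Definition dl (a b : I16) : int := (a == b)%:R.
Definition K1 (a b c d : I16) := dl a b * dl c d.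
Definition K2 (a b c d : I16) := dl a c * dl b d.
Definition K3 (a b c d : I16) := dl a d * dl b c.
Definition E4 (a b c d : I16) := dl a b * dl a c * dl a d.
Definition Zp (a b c d : I16) := 8 * (K1 a b c d + K2 a b c d + K3 a b c d) - 9 * E4 a b c d.

Ltac dec := repeat match goal with
 | H : is_true (~~ (?x == ?x)) |- _ => by rewrite eqxx in H
 | |- context [ ?x == ?y ] => let E := fresh "E" in case E: (x == y);
      [move/eqP: E => E; subst | move/negbT: E => E ]
 end.

Lemma Zp2 a b c d : Zp a b c d ^+ 2 = 64 * (K1 a b c d + K2 a b c d + K3 a b c d) + 33 * E4 a b c d.
Proof.
rewrite /Zp /K1 /K2 /K3 /E4 /dl.
dec; rewrite ?eqxx //=; try lia.
Qed.

Lemma sum_dl (f : I16 -> int) c : \sum_(d < 16) f d * dl c d = f c.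
Proof.
rewrite (bigD1 c) //= /dl eqxx mulr1 big1 ?addr0 // => d.
by rewrite eq_sym => /negbTE ->; rewrite mulr0.
Qed.

Lemma S4K1 F : S4 (fun a b c d => F a b c d * K1 a b c d) = \sum_(a < 16) \sum_(c < 16) F a a c c.
Proof.
rewrite /S4 /K1; apply: eq_bigr => a _.
transitivity (\sum_(b < 16) (\sum_(c < 16) F a b c c) * dl a b); last by rewrite sum_dl.
apply: eq_bigr => b _; rewrite mulr_suml; apply: eq_bigr => c _.
under eq_bigr => d _ do rewrite mulrA.
by rewrite (sum_dl (fun d => F a b c d * dl a b)).
Qed.

Lemma S4K2 F : S4 (fun a b c d => F a b c d * K2 a b c d) = \sum_(a < 16) \sum_(b < 16) F a b a b.
Proof.
rewrite /S4 /K2; apply: eq_bigr => a _; apply: eq_bigr => b _.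
transitivity (\sum_(c < 16) F a b c b * dl a c); last by rewrite sum_dl.
apply: eq_bigr => c _.
under eq_bigr => d _ do rewrite mulrA.
by rewrite (sum_dl (fun d => F a b c d * dl a c)).
Qed.

Lemma S4K3 F : S4 (fun a b c d => F a b c d * K3 a b c d) = \sum_(a < 16) \sum_(b < 16) F a b b a.
Proof.
rewrite /S4 /K3; apply: eq_bigr => a _; apply: eq_bigr => b _.
transitivity (\sum_(c < 16) F a b c a * dl b c); last by rewrite sum_dl.
apply: eq_bigr => c _.
under eq_bigr => d _ do rewrite mulrA (mulrAC (F a b c d)).
by rewrite (sum_dl (fun d => F a b c d * dl b c)).
Qed.

Lemma S4E F : S4 (fun a b c d => F a b c d * E4 a b c d) = \sum_(a < 16) F a a a a.
Proof.
rewrite /S4 /E4; apply: eq_bigr => a _.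
transitivity (\sum_(b < 16) F a b a a * dl a b); last by rewrite sum_dl.
apply: eq_bigr => b _.
transitivity (\sum_(c < 16) F a b c a * dl a b * dl a c); last first.
  by rewrite (sum_dl (fun c => F a b c a * dl a b)).
apply: eq_bigr => c _.
under eq_bigr => d _ do rewrite !mulrA.
by rewrite (sum_dl (fun d => F a b c d * dl a b * dl a c)).
Qed.

Lemma sum_const16 (x : int) : \sum_(a < 16) x = 16 * x.
Proof. by rewrite big_const card_ord /=; ring. Qed.

Lemma S4K1c : S4 K1 = 16 * 16.
Proof.
rewrite (S4_ext (g := fun a b c d => (fun _ _ _ _ => 1) a b c d * K1 a b c d)).
  by rewrite S4K1 /= !sum_const16 mulr1.
by move=> *; rewrite mul1r.
Qed.
Lemma S4K2c : S4 K2 = 16 * 16.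
Proof.
rewrite (S4_ext (g := fun a b c d => (fun _ _ _ _ => 1) a b c d * K2 a b c d)).
  by rewrite S4K2 /= !sum_const16 mulr1.
by move=> *; rewrite mul1r.
Qed.
Lemma S4K3c : S4 K3 = 16 * 16.
Proof.
rewrite (S4_ext (g := fun a b c d => (fun _ _ _ _ => 1) a b c d * K3 a b c d)).
  by rewrite S4K3 /= !sum_const16 mulr1.
by move=> *; rewrite mul1r.
Qed.
Lemma S4Ec : S4 E4 = 16.
Proof.
rewrite (S4_ext (g := fun a b c d => (fun _ _ _ _ => 1) a b c d * E4 a b c d)).
  by rewrite S4E /= !sum_const16 mulr1.
by move=> *; rewrite mul1r.
Qed.

Lemma S4Zp2 : S4 (fun a b c d => Zp a b c d ^+ 2) = 64 * (3 * 256) + 33 * 16.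
Proof.
rewrite (S4_ext (g := fun a b c d => 64 * K1 a b c d + 64 * K2 a b c d
   + 64 * K3 a b c d + 33 * E4 a b c d)); last first.
  by move=> a b c d; rewrite Zp2; ring.
rewrite !S4D !S4Z S4K1c S4K2c S4K3c S4Ec; ring.
Qed.

Section Key.
Variables (V : finType) (x : V -> I16 -> int).
Definition F4 a b c d := \sum_(v : V) x v a * x v b * x v c * x v d.

Lemma S4F2 : S4 (fun a b c d => F4 a b c d ^+ 2) =
  \sum_(v : V) \sum_(w : V) (\sum_(a < 16) x v a * x w a) ^+ 4.
Proof.
rewrite (S4_ext (g := fun a b c d => \sum_(v : V) \sum_(w : V)
   (x v a * x w a) * (x v b * x w b) * (x v c * x w c) * (x v d * x w d))); last first.
  move=> a b c d; rewrite /F4 expr2 mulr_suml; apply: eq_bigr => v _.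
  rewrite mulr_sumr; apply: eq_bigr => w _; ring.
rewrite (S4_sum (fun v a b c d => \sum_(w : V)
   (x v a * x w a) * (x v b * x w b) * (x v c * x w c) * (x v d * x w d))).
apply: eq_bigr => v _.
rewrite (S4_sum (fun w a b c d =>
   (x v a * x w a) * (x v b * x w b) * (x v c * x w c) * (x v d * x w d))).
apply: eq_bigr => w _.
exact: (S4_prod (fun a => x v a * x w a)).
Qed.

Lemma sum2_sq (V' : finType) (y : V' -> I16 -> int) :
  \sum_(a < 16) \sum_(c < 16) \sum_(v : V') y v a * y v c =
  \sum_(v : V') (\sum_(a < 16) y v a) ^+ 2.
Proof.
under eq_bigr => a _ do rewrite exchange_big.
rewrite exchange_big; apply: eq_bigr => v _.
rewrite expr2 mulr_suml; apply: eq_bigr => a _; by rewrite mulr_sumr.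
Qed.

Lemma S4FZp : S4 (fun a b c d => F4 a b c d * Zp a b c d) =
  24 * \sum_(v : V) (\sum_(a < 16) x v a ^+ 2) ^+ 2
  - 9 * \sum_(v : V) \sum_(a < 16) x v a ^+ 4.
Proof.
rewrite (S4_ext (g := fun a b c d => 8 * (F4 a b c d * K1 a b c d)
   + 8 * (F4 a b c d * K2 a b c d) + 8 * (F4 a b c d * K3 a b c d)
   + (-9) * (F4 a b c d * E4 a b c d))); last first.
  by move=> a b c d; rewrite /Zp; ring.
rewrite !S4D !S4Z S4K1 S4K2 S4K3 S4E.
have h1 : \sum_(a < 16) \sum_(c < 16) F4 a a c c = \sum_(v : V) (\sum_(a < 16) x v a ^+ 2) ^+ 2.
  rewrite -(sum2_sq (fun v a => x v a ^+ 2)); apply: eq_bigr => a _; apply: eq_bigr => c _.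
  by apply: eq_bigr => v _; ring.
have h2 : \sum_(a < 16) \sum_(c < 16) F4 a c a c = \sum_(v : V) (\sum_(a < 16) x v a ^+ 2) ^+ 2.
  rewrite -(sum2_sq (fun v a => x v a ^+ 2)); apply: eq_bigr => a _; apply: eq_bigr => c _.
  by apply: eq_bigr => v _; ring.
have h3 : \sum_(a < 16) \sum_(c < 16) F4 a c c a = \sum_(v : V) (\sum_(a < 16) x v a ^+ 2) ^+ 2.
  rewrite -(sum2_sq (fun v a => x v a ^+ 2)); apply: eq_bigr => a _; apply: eq_bigr => c _.
  by apply: eq_bigr => v _; ring.
have h4 : \sum_(a < 16) F4 a a a a = \sum_(v : V) \sum_(a < 16) x v a ^+ 4.
  rewrite exchange_big; apply: eq_bigr => a _; apply: eq_bigr => v _; ring.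
rewrite h1 h2 h3 h4; ring.
Qed.

Lemma key (t : int) :
  0 <= 25 * (\sum_(v : V) \sum_(w : V) (\sum_(a < 16) x v a * x w a) ^+ 4)
     - 10 * t * (24 * \sum_(v : V) (\sum_(a < 16) x v a ^+ 2) ^+ 2
                 - 9 * \sum_(v : V) \sum_(a < 16) x v a ^+ 4)
     + t ^+ 2 * (64 * (3 * 256) + 33 * 16).
Proof.
have h0 : 0 <= S4 (fun a b c d => (5 * F4 a b c d - t * Zp a b c d) ^+ 2).
  rewrite /S4; apply: sumr_ge0 => a _; apply: sumr_ge0 => b _.
  apply: sumr_ge0 => c _; apply: sumr_ge0 => d _; exact: sqr_ge0.
rewrite (S4_ext (g := fun a b c d => 25 * (F4 a b c d ^+ 2)
   + (- 10 * t) * (F4 a b c d * Zp a b c d) + t ^+ 2 * (Zp a b c d ^+ 2))) in h0; last first.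
  by move=> a b c d; ring.
rewrite !S4D !S4Z S4F2 S4FZp S4Zp2 in h0.
by move: h0; congr (0 <= _); ring.
Qed.
End Key.

Lemma sqrtC9 : sqrtC (GRing.natmul (1 : algC) 9) = 3.
Proof.
have -> : GRing.natmul (1 : algC) 9 = 3 ^+ 2 by rewrite -natrX.
by rewrite sqrCK // ler0n.
Qed.

Lemma sumI_const n (c : int) : \sum_(k < n) c = n%:R * c.
Proof. by rewrite big_const_ord iter_addr_0 mulr_natl. Qed.

Lemma sum_dlT (T : finType) (f : T -> int) (c : T) : \sum_(d : T) f d * (c == d)%:R = f c.
Proof.
rewrite (bigD1 c) //= eqxx mulr1 big1 ?addr0 // => d.
by rewrite eq_sym => /negbTE ->; rewrite mulr0.
Qed.

Lemma wrow W : weighing_matrix 16 9 W -> forall r : 'I_16, \sum_(a < 16) W r a ^+ 2 = 9.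
Proof.
case=> _ /matrixP h r; move: (h r r); rewrite !mxE eqxx mulr1n => <-.
by apply: eq_bigr => a _; rewrite mxE expr2.
Qed.

Lemma ent4 W : weighing_matrix 16 9 W -> forall r a : 'I_16, W r a ^+ 4 = W r a ^+ 2.
Proof. by case=> h _ r a; case: (h r a) => [->|[->|->]]. Qed.

Lemma diag4 W : weighing_matrix 16 9 W ->
  \sum_(r < 16) \sum_(s < 16) ((W *m W^T) r s) ^+ 4 = 16 * 9 ^+ 4.
Proof.
case=> _ ->; rewrite -[RHS](sumI_const 16 (9 ^+ 4)).
apply: eq_bigr => r _.
under eq_bigr => s _ do rewrite mxE.
have := sum_dlT (fun s : 'I_16 => (9 : int) ^+ 4) r.
move=> <-; apply: eq_bigr => s _.
by case: (r == s); rewrite /= ?mulr1 ?mulr0 ?mulr1n ?mulr0n ?expr0n.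
Qed.

Lemma unb_ent W1 W2 : unbiased 16 9 W1 W2 ->
  exists V, weighing_matrix 16 9 V /\ forall r s, (W1 *m W2^T) r s = 3 * V r s.
Proof.
case=> V [HV Heq]; exists V; split => // r s.
move/matrixP: Heq => /(_ r s).
set P := W1 *m W2^T.
rewrite mxE [in X in _ * X]mxE mxE mxE sqrtC9 => h.
apply: (@intr_inj algC); rewrite intrM -h mulrA mulfV ?mul1r //.
by rewrite pnatr_eq0.
Qed.

Lemma off4 W1 W2 : unbiased 16 9 W1 W2 ->
  \sum_(r < 16) \sum_(s < 16) ((W1 *m W2^T) r s) ^+ 4 = 16 * (81 * 9).
Proof.
case/unb_ent => V [HV HE].
rewrite -[RHS](sumI_const 16 (81 * 9)); apply: eq_bigr => r _.
rewrite -(wrow HV r) mulr_sumr; apply: eq_bigr => s _.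
by rewrite HE exprMn (ent4 HV).
Qed.

Lemma pairE m (g : ('I_m * 'I_16)%type -> int) :
  \sum_(v : ('I_m * 'I_16)%type) g v = \sum_(k < m) \sum_(r < 16) g (k, r).
Proof. by rewrite pair_bigA; apply: eq_bigr => -[k r]. Qed.

Theorem upper S : MUWM 16 9 S -> (size S <= 15)%N.
Proof.
case=> huq [hw hu].
set m := size S.
pose x (v : ('I_m * 'I_16)%type) (a : 'I_16) := (nth 0 S v.1) v.2 a.
have hW (k : 'I_m) : weighing_matrix 16 9 (nth 0 S k) by apply: hw; apply: mem_nth.
have K := key x (3 * m%:R).
have hB : \sum_(v : ('I_m * 'I_16)%type) (\sum_(a < 16) x v a ^+ 2) ^+ 2 = m%:R * (16 * 81).
  rewrite pairE -sumI_const; apply: eq_bigr => k _.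
  rewrite -sumI_const; apply: eq_bigr => r _.
  by rewrite /x /= (wrow (hW k) r).
have hC : \sum_(v : ('I_m * 'I_16)%type) \sum_(a < 16) x v a ^+ 4 = m%:R * (16 * 9).
  rewrite pairE -sumI_const; apply: eq_bigr => k _.
  rewrite -sumI_const; apply: eq_bigr => r _.
  rewrite /x /= -(wrow (hW k) r); apply: eq_bigr => a _; exact: ent4.
have hA : \sum_(v : ('I_m * 'I_16)%type) \sum_(w : ('I_m * 'I_16)%type)
      (\sum_(a < 16) x v a * x w a) ^+ 4
    = m%:R * (m%:R * (16 * (81 * 9)) + (16 * 9 ^+ 4 - 16 * (81 * 9))).
  rewrite pairE -sumI_const; apply: eq_bigr => k _.
  under eq_bigr => r _ do rewrite pairE.
  rewrite exchange_big /=.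
  transitivity (\sum_(k' < m) ((16 * (81 * 9) + (16 * 9 ^+ 4 - 16 * (81 * 9)) * (k == k')%:R) : int)).
    apply: eq_bigr => k' _.
    have -> : \sum_(r < 16) \sum_(s < 16) (\sum_(a < 16) x (k, r) a * x (k', s) a) ^+ 4
        = \sum_(r < 16) \sum_(s < 16) ((nth 0 S k *m (nth 0 S k')^T) r s) ^+ 4.
      by apply: eq_bigr => r _; apply: eq_bigr => s _; rewrite mxE; congr (_ ^+ 4);
         apply: eq_bigr => a _; rewrite mxE.
    case: (eqVneq k k') => [<-|nk].
      by rewrite diag4 // mulr1; ring.
    rewrite off4 ?mulr0 ?addr0 //; apply: hu; try apply: mem_nth => //.
    by rewrite nth_uniq.
  rewrite big_split /= sum_dlT sumI_const //.
have := K; rewrite hA hB hC.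
rewrite natz.
move=> h; have: (0 <= (480 * 324) * (m%:Z) * (15 - m%:Z))%R.
  by move: h; congr (0 <= _); ring.
rewrite -/m; nia.
Qed.

Definition toZ (n : nat) : int := if n == 1%N then 1 else if n == 2%N then -1 else 0.
Definition mxd (a : seq (seq nat)) : 'M[int]_16 :=
  \matrix_(i < 16, j < 16) toZ (nth 0%N (nth [::] a i) j).
Fixpoint dotl (r s : seq nat) : int :=
  match r, s with x :: r', y :: s' => toZ x * toZ y + dotl r' s' | _, _ => 0 end.

Lemma dotlE n (r s : seq nat) : size r = n -> size s = n ->
  \sum_(k < n) toZ (nth 0%N r k) * toZ (nth 0%N s k) = dotl r s.
Proof.
elim: r n s => [|x r IH] n [|y s] //=.
- by move=> <- _; rewrite big_ord0.
- by move=> <-.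
- by move=> <-.
move=> <- [hs]; rewrite big_ord_recl /=; congr (_ + _); exact: IH.
Qed.

Lemma toZ_val n : toZ n = 1 \/ toZ n = -1 \/ toZ n = 0.
Proof. rewrite /toZ; case: eqP => _; first by left. case: eqP => _; by auto. Qed.

Definition rows_ok (a : seq (seq nat)) := (size a == 16%N) && all (fun r => size r == 16%N) a.

Lemma rows_size a (i : 'I_16) : rows_ok a -> size (nth [::] a i) = 16%N.
Proof.
case/andP => /eqP sa /allP h; apply/eqP/h; apply: mem_nth; by rewrite sa.
Qed.

Lemma mxd_mul a b (i j : 'I_16) : rows_ok a -> rows_ok b ->
  (mxd a *m (mxd b)^T) i j = dotl (nth [::] a i) (nth [::] b j).
Proof.
move=> ha hb; rewrite !mxE; under eq_bigr => k _ do rewrite !mxE.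
by apply: dotlE; apply: rows_size.
Qed.

Definition wchk (a : seq (seq nat)) := rows_ok a &&
  all (fun i => all (fun j => dotl (nth [::] a i) (nth [::] a j) == (if i == j then 9 else 0))
    (iota 0 16)) (iota 0 16).

Lemma wchk_ok a : wchk a -> weighing_matrix 16 9 (mxd a).
Proof.
case/andP=> ha /allP h; split.
  by move=> i j; rewrite mxE; apply: toZ_val.
apply/matrixP => i j; rewrite mxd_mul // !mxE.
have hi : (nat_of_ord i \in iota 0 16) by rewrite mem_iota leq0n add0n ltn_ord.
have hj : (nat_of_ord j \in iota 0 16) by rewrite mem_iota leq0n add0n ltn_ord.
move: (h _ hi) => /allP /(_ _ hj) /eqP ->.
by case: (i =P j) => [->|/eqP nij]; rewrite ?eqxx //= ifN.
Qed.



Definition thirdZ (x : int) : nat := if x == 3 then 1%N else if x == -3 then 2%N else 0%N.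

Definition vd (a b : seq (seq nat)) : seq (seq nat) :=
  map (fun r => map (fun s => thirdZ (dotl r s)) b) a.

Definition uchk (a b : seq (seq nat)) :=
  all (fun r => all (fun s => (dotl r s == 0) || (dotl r s == 3) || (dotl r s == -3)) b) a
  && wchk (vd a b).

Lemma uchk_ent a b (i j : 'I_16) : rows_ok a -> rows_ok b -> uchk a b ->
  (mxd a *m (mxd b)^T) i j = 3 * mxd (vd a b) i j.
Proof.
move=> ha hb /andP [/allP h _].
have sa : size a = 16%N by case/andP: ha => /eqP.
have sb : size b = 16%N by case/andP: hb => /eqP.
rewrite mxd_mul // mxE /vd (nth_map [::]) ?sa // (nth_map [::]) ?sb //.
have ia : (nat_of_ord i < size a)%N by rewrite sa.
have jb : (nat_of_ord j < size b)%N by rewrite sb.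
move: (h _ (mem_nth [::] ia)) => /allP /(_ _ (mem_nth [::] jb)).
set x := dotl _ _.
by case/orP => [/orP [] | ] /eqP ->.
Qed.

Lemma uchk_ok a b : rows_ok a -> rows_ok b -> uchk a b -> unbiased 16 9 (mxd a) (mxd b).
Proof.
move=> ha hb hu; exists (mxd (vd a b)); split.
  by apply: wchk_ok; case/andP: hu.
apply/matrixP => i j.
rewrite [LHS]mxE [in LHS]mxE uchk_ent // sqrtC9 [RHS]mxE.
by rewrite intrM mulrA mulVf ?mul1r // pnatr_eq0.
Qed.
Definition datal : seq (seq (seq nat)) := [::
  [:: [:: 1; 0; 0; 0; 0; 0; 0; 0; 1; 1; 1; 1; 1; 1; 1; 1];
     [:: 0; 1; 0; 0; 0; 0; 0; 0; 1; 2; 1; 2; 1; 2; 1; 2];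
     [:: 0; 0; 1; 0; 0; 0; 0; 0; 1; 1; 2; 2; 1; 1; 2; 2];
     [:: 0; 0; 0; 1; 0; 0; 0; 0; 1; 2; 2; 1; 1; 2; 2; 1];
     [:: 0; 0; 0; 0; 1; 0; 0; 0; 1; 1; 1; 1; 2; 2; 2; 2];
     [:: 0; 0; 0; 0; 0; 1; 0; 0; 1; 2; 1; 2; 2; 1; 2; 1];
     [:: 0; 0; 0; 0; 0; 0; 1; 0; 1; 1; 2; 2; 2; 2; 1; 1];
     [:: 0; 0; 0; 0; 0; 0; 0; 1; 1; 2; 2; 1; 2; 1; 1; 2];
     [:: 1; 1; 1; 1; 1; 1; 1; 1; 2; 0; 0; 0; 0; 0; 0; 0];
     [:: 1; 2; 1; 2; 1; 2; 1; 2; 0; 2; 0; 0; 0; 0; 0; 0];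
     [:: 1; 1; 2; 2; 1; 1; 2; 2; 0; 0; 2; 0; 0; 0; 0; 0];
     [:: 1; 2; 2; 1; 1; 2; 2; 1; 0; 0; 0; 2; 0; 0; 0; 0];
     [:: 1; 1; 1; 1; 2; 2; 2; 2; 0; 0; 0; 0; 2; 0; 0; 0];
     [:: 1; 2; 1; 2; 2; 1; 2; 1; 0; 0; 0; 0; 0; 2; 0; 0];
     [:: 1; 1; 2; 2; 2; 2; 1; 1; 0; 0; 0; 0; 0; 0; 2; 0];
     [:: 1; 2; 2; 1; 2; 1; 1; 2; 0; 0; 0; 0; 0; 0; 0; 2]];
  [:: [:: 0; 0; 0; 1; 2; 2; 2; 1; 2; 0; 0; 0; 0; 1; 1; 2];
     [:: 0; 0; 1; 0; 1; 1; 2; 1; 0; 2; 1; 1; 2; 0; 0; 0];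
     [:: 0; 1; 0; 2; 0; 0; 2; 1; 0; 1; 2; 0; 0; 2; 2; 2];
     [:: 0; 1; 0; 2; 0; 0; 1; 1; 2; 0; 0; 1; 1; 0; 1; 1];
     [:: 0; 1; 0; 0; 2; 1; 2; 2; 2; 0; 0; 0; 0; 1; 2; 1];
     [:: 0; 1; 0; 1; 0; 0; 1; 2; 2; 0; 0; 1; 2; 2; 0; 2];
     [:: 0; 1; 0; 1; 0; 0; 1; 1; 1; 1; 1; 0; 0; 1; 2; 0];
     [:: 1; 2; 2; 2; 2; 0; 0; 0; 0; 1; 1; 1; 2; 0; 0; 0];
     [:: 1; 2; 1; 1; 0; 1; 0; 0; 0; 1; 2; 1; 1; 0; 0; 0];
     [:: 1; 0; 2; 0; 1; 2; 0; 0; 0; 2; 2; 1; 0; 1; 2; 0];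
     [:: 1; 0; 2; 0; 1; 1; 0; 0; 2; 0; 1; 2; 1; 0; 0; 2];
     [:: 1; 0; 0; 0; 2; 1; 1; 1; 0; 2; 2; 2; 2; 0; 0; 0];
     [:: 1; 0; 1; 0; 2; 2; 0; 0; 0; 2; 1; 0; 1; 2; 2; 0];
     [:: 1; 0; 1; 0; 1; 2; 0; 0; 2; 1; 0; 2; 2; 0; 0; 1];
     [:: 1; 1; 2; 1; 0; 0; 2; 0; 1; 0; 0; 0; 0; 2; 1; 1];
     [:: 1; 1; 1; 2; 0; 0; 0; 2; 1; 0; 0; 0; 0; 1; 1; 2]];
  [:: [:: 0; 0; 1; 1; 2; 1; 0; 1; 0; 0; 0; 2; 1; 0; 2; 1];
     [:: 0; 0; 1; 1; 1; 2; 2; 0; 1; 1; 2; 0; 0; 2; 0; 0];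
     [:: 0; 1; 2; 0; 0; 2; 0; 1; 0; 1; 0; 2; 0; 1; 1; 1];
     [:: 0; 1; 2; 1; 1; 1; 0; 0; 0; 0; 0; 1; 2; 0; 2; 1];
     [:: 0; 1; 1; 0; 0; 2; 0; 2; 0; 2; 0; 1; 1; 1; 0; 1];
     [:: 0; 1; 1; 0; 0; 2; 0; 1; 2; 0; 1; 0; 2; 0; 2; 2];
     [:: 0; 1; 1; 0; 0; 1; 0; 2; 2; 0; 2; 2; 2; 0; 1; 0];
     [:: 1; 2; 0; 1; 0; 0; 2; 2; 2; 1; 1; 0; 0; 1; 0; 0];
     [:: 1; 2; 1; 0; 0; 0; 1; 1; 0; 0; 0; 1; 2; 0; 1; 1];
     [:: 1; 0; 2; 1; 2; 2; 0; 0; 2; 2; 2; 0; 0; 2; 0; 0];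
     [:: 1; 0; 0; 2; 2; 0; 2; 0; 1; 0; 2; 0; 2; 1; 2; 0];
     [:: 1; 0; 0; 2; 1; 0; 2; 0; 0; 2; 1; 2; 0; 2; 0; 1];
     [:: 1; 0; 0; 2; 1; 0; 1; 0; 2; 1; 2; 0; 1; 0; 2; 0];
     [:: 1; 0; 0; 1; 1; 0; 1; 0; 1; 2; 0; 2; 0; 1; 0; 2];
     [:: 1; 1; 0; 0; 2; 0; 1; 2; 1; 1; 1; 0; 0; 2; 0; 0];
     [:: 1; 1; 0; 0; 0; 1; 2; 1; 0; 0; 0; 1; 1; 0; 1; 2]];
  [:: [:: 0; 0; 1; 0; 2; 0; 2; 2; 1; 0; 0; 1; 1; 2; 1; 0];
     [:: 0; 0; 1; 0; 1; 0; 2; 2; 0; 2; 2; 0; 2; 0; 2; 1];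
     [:: 0; 0; 1; 0; 1; 0; 1; 2; 2; 1; 0; 1; 0; 1; 1; 0];
     [:: 0; 0; 1; 0; 1; 0; 1; 1; 1; 2; 1; 0; 1; 0; 0; 1];
     [:: 0; 1; 2; 0; 0; 1; 1; 2; 1; 2; 0; 0; 2; 0; 1; 0];
     [:: 0; 1; 2; 0; 1; 2; 2; 0; 2; 2; 0; 0; 1; 0; 1; 0];
     [:: 0; 1; 1; 1; 0; 1; 2; 0; 0; 0; 1; 2; 0; 1; 0; 2];
     [:: 1; 2; 0; 2; 0; 1; 0; 0; 0; 2; 2; 0; 1; 1; 0; 2];
     [:: 1; 2; 0; 1; 0; 2; 0; 0; 0; 2; 1; 1; 2; 0; 0; 2];
     [:: 1; 2; 0; 1; 0; 1; 0; 0; 2; 0; 0; 2; 0; 2; 1; 1];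
     [:: 1; 0; 2; 1; 1; 0; 0; 2; 1; 1; 0; 0; 1; 0; 2; 0];
     [:: 1; 0; 0; 2; 2; 2; 0; 2; 0; 0; 1; 2; 0; 1; 0; 1];
     [:: 1; 0; 0; 2; 1; 0; 2; 1; 1; 1; 0; 0; 2; 0; 1; 0];
     [:: 1; 1; 0; 2; 0; 1; 0; 0; 2; 0; 1; 1; 0; 2; 2; 0];
     [:: 1; 1; 0; 1; 2; 0; 0; 1; 0; 0; 2; 1; 0; 1; 0; 1];
     [:: 1; 1; 1; 0; 0; 2; 1; 0; 0; 0; 2; 2; 0; 2; 0; 2]];
  [:: [:: 0; 0; 1; 2; 2; 0; 2; 2; 0; 1; 1; 0; 0; 0; 2; 2];
     [:: 0; 0; 1; 2; 0; 2; 1; 1; 1; 0; 0; 2; 2; 1; 0; 0];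
     [:: 0; 1; 2; 2; 2; 0; 0; 0; 1; 1; 2; 1; 0; 0; 1; 0];
     [:: 0; 1; 2; 2; 1; 0; 0; 0; 0; 0; 1; 0; 1; 1; 2; 1];
     [:: 0; 1; 2; 1; 2; 0; 0; 0; 0; 2; 0; 0; 2; 1; 2; 2];
     [:: 0; 1; 1; 2; 1; 0; 0; 0; 2; 2; 2; 1; 0; 0; 0; 2];
     [:: 0; 1; 1; 1; 0; 0; 1; 2; 0; 1; 2; 0; 0; 0; 2; 1];
     [:: 1; 2; 0; 0; 2; 2; 1; 0; 2; 0; 0; 1; 1; 1; 0; 0];
     [:: 1; 2; 0; 0; 1; 1; 0; 2; 1; 0; 0; 1; 2; 1; 0; 0];
     [:: 1; 0; 2; 2; 0; 0; 1; 2; 2; 0; 0; 2; 2; 2; 0; 0];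
     [:: 1; 0; 0; 0; 0; 2; 2; 2; 1; 2; 2; 2; 1; 0; 0; 0];
     [:: 1; 0; 0; 0; 0; 2; 2; 1; 0; 0; 0; 1; 2; 2; 2; 1];
     [:: 1; 0; 0; 0; 0; 1; 2; 1; 2; 1; 2; 2; 0; 1; 0; 0];
     [:: 1; 0; 0; 0; 0; 1; 1; 1; 1; 0; 0; 0; 1; 2; 2; 2];
     [:: 1; 1; 0; 1; 1; 2; 0; 0; 0; 1; 1; 0; 0; 0; 1; 2];
     [:: 1; 1; 1; 0; 2; 1; 0; 0; 0; 2; 1; 0; 0; 0; 1; 1]];
  [:: [:: 0; 0; 0; 1; 2; 1; 0; 2; 0; 1; 0; 1; 2; 0; 1; 1];
     [:: 0; 0; 0; 1; 2; 1; 0; 1; 2; 2; 1; 0; 0; 2; 0; 2];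
     [:: 0; 0; 0; 1; 1; 2; 0; 1; 2; 0; 1; 1; 0; 1; 0; 1];
     [:: 0; 0; 0; 1; 1; 1; 0; 1; 1; 1; 0; 2; 1; 0; 1; 0];
     [:: 0; 1; 0; 1; 2; 2; 1; 0; 1; 2; 0; 2; 0; 0; 0; 1];
     [:: 0; 1; 0; 1; 1; 0; 2; 2; 1; 2; 0; 1; 0; 0; 0; 2];
     [:: 0; 1; 1; 2; 1; 0; 1; 0; 0; 0; 1; 0; 2; 2; 1; 0];
     [:: 1; 2; 2; 0; 0; 2; 0; 2; 0; 0; 1; 0; 1; 2; 1; 0];
     [:: 1; 2; 0; 1; 1; 0; 1; 0; 0; 0; 2; 0; 2; 2; 2; 0];
     [:: 1; 2; 1; 0; 0; 0; 2; 0; 0; 2; 0; 2; 2; 1; 1; 0];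
     [:: 1; 0; 2; 2; 0; 1; 0; 1; 1; 2; 0; 1; 0; 0; 0; 1];
     [:: 1; 0; 1; 0; 2; 2; 0; 1; 1; 1; 0; 1; 0; 0; 0; 2];
     [:: 1; 0; 1; 0; 0; 1; 1; 2; 0; 0; 1; 0; 1; 1; 2; 0];
     [:: 1; 1; 2; 0; 0; 0; 2; 0; 0; 1; 1; 2; 2; 0; 2; 0];
     [:: 1; 1; 2; 0; 0; 0; 1; 0; 2; 0; 2; 0; 0; 1; 1; 2];
     [:: 1; 1; 1; 0; 0; 0; 2; 0; 2; 0; 2; 0; 1; 2; 0; 1]];
  [:: [:: 0; 0; 1; 2; 0; 2; 1; 0; 0; 1; 1; 1; 0; 0; 2; 1];
     [:: 0; 0; 1; 2; 0; 1; 2; 0; 0; 0; 2; 1; 0; 1; 1; 1];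
     [:: 0; 0; 1; 2; 0; 1; 1; 0; 2; 2; 0; 2; 1; 2; 0; 0];
     [:: 0; 0; 1; 1; 0; 1; 2; 0; 2; 1; 0; 0; 2; 2; 2; 0];
     [:: 0; 1; 0; 2; 2; 1; 0; 1; 1; 0; 1; 0; 2; 0; 0; 2];
     [:: 0; 1; 0; 2; 0; 2; 2; 2; 0; 1; 0; 2; 0; 2; 1; 0];
     [:: 0; 1; 1; 1; 0; 2; 0; 1; 0; 2; 0; 1; 0; 2; 1; 0];
     [:: 1; 2; 0; 2; 0; 2; 0; 1; 2; 0; 2; 0; 2; 0; 0; 2];
     [:: 1; 2; 0; 0; 2; 0; 0; 2; 1; 2; 0; 0; 2; 2; 0; 1];
     [:: 1; 2; 1; 0; 1; 0; 2; 0; 1; 0; 1; 0; 1; 0; 0; 2];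
     [:: 1; 0; 2; 0; 2; 0; 2; 1; 2; 0; 1; 0; 1; 0; 0; 1];
     [:: 1; 0; 2; 0; 1; 1; 1; 0; 0; 1; 0; 1; 0; 2; 1; 0];
     [:: 1; 0; 1; 1; 2; 0; 1; 0; 0; 1; 0; 2; 0; 1; 1; 0];
     [:: 1; 1; 0; 0; 2; 0; 0; 2; 0; 0; 2; 1; 1; 0; 2; 2];
     [:: 1; 1; 0; 0; 1; 0; 0; 2; 2; 2; 1; 0; 2; 1; 0; 0];
     [:: 1; 1; 0; 0; 1; 0; 0; 1; 1; 0; 2; 2; 0; 0; 2; 1]];
  [:: [:: 0; 1; 2; 2; 2; 0; 0; 2; 0; 2; 0; 0; 1; 2; 0; 1];
     [:: 0; 1; 0; 0; 2; 2; 1; 0; 0; 0; 1; 1; 2; 1; 1; 0];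
     [:: 0; 1; 0; 0; 2; 1; 1; 0; 2; 1; 0; 2; 0; 0; 2; 2];
     [:: 0; 1; 0; 0; 1; 1; 2; 0; 2; 1; 1; 0; 0; 0; 1; 1];
     [:: 0; 1; 0; 0; 1; 1; 1; 0; 1; 0; 2; 1; 1; 1; 0; 0];
     [:: 0; 1; 1; 0; 2; 0; 2; 1; 1; 0; 2; 2; 0; 0; 1; 0];
     [:: 0; 1; 1; 0; 1; 2; 0; 2; 1; 0; 1; 2; 0; 0; 2; 0];
     [:: 1; 2; 0; 2; 0; 1; 1; 0; 1; 0; 1; 2; 0; 0; 1; 0];
     [:: 1; 0; 2; 2; 0; 2; 2; 0; 0; 1; 0; 0; 1; 1; 0; 2];
     [:: 1; 0; 2; 1; 0; 0; 0; 2; 0; 0; 2; 2; 2; 1; 0; 1];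
     [:: 1; 0; 0; 1; 2; 1; 2; 0; 1; 0; 1; 1; 0; 0; 2; 0];
     [:: 1; 0; 0; 1; 0; 2; 1; 1; 0; 1; 0; 0; 1; 2; 0; 1];
     [:: 1; 0; 1; 2; 0; 0; 0; 2; 0; 1; 2; 1; 2; 2; 0; 0];
     [:: 1; 0; 1; 2; 0; 0; 0; 1; 2; 2; 0; 0; 0; 1; 2; 1];
     [:: 1; 0; 1; 1; 0; 0; 0; 2; 2; 2; 0; 0; 1; 0; 1; 2];
     [:: 1; 1; 2; 0; 1; 0; 0; 1; 0; 2; 0; 0; 2; 2; 0; 2]];
  [:: [:: 0; 0; 0; 1; 2; 2; 0; 2; 1; 0; 1; 0; 1; 1; 0; 2];
     [:: 0; 0; 0; 1; 2; 2; 0; 1; 0; 1; 2; 2; 2; 0; 2; 0];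
     [:: 0; 0; 0; 1; 1; 2; 0; 2; 0; 2; 0; 2; 2; 2; 1; 0];
     [:: 0; 0; 0; 1; 1; 1; 0; 2; 2; 0; 2; 0; 0; 1; 2; 2];
     [:: 0; 1; 2; 2; 1; 0; 1; 0; 1; 1; 0; 2; 0; 0; 0; 2];
     [:: 0; 1; 0; 1; 2; 1; 1; 0; 0; 0; 2; 0; 1; 2; 1; 0];
     [:: 0; 1; 0; 1; 1; 0; 2; 1; 0; 0; 1; 0; 1; 2; 2; 0];
     [:: 1; 2; 2; 0; 0; 0; 2; 0; 1; 0; 2; 1; 0; 2; 0; 2];
     [:: 1; 2; 2; 0; 0; 0; 1; 0; 0; 2; 0; 2; 1; 0; 2; 1];
     [:: 1; 2; 1; 0; 0; 0; 1; 0; 2; 1; 1; 0; 0; 2; 0; 2];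
     [:: 1; 0; 2; 1; 0; 1; 0; 1; 0; 0; 1; 0; 2; 1; 1; 0];
     [:: 1; 0; 1; 0; 0; 1; 2; 2; 1; 1; 0; 2; 0; 0; 0; 1];
     [:: 1; 0; 1; 0; 1; 2; 0; 1; 0; 0; 2; 0; 1; 1; 1; 0];
     [:: 1; 1; 2; 0; 0; 2; 0; 2; 2; 1; 0; 1; 0; 0; 0; 1];
     [:: 1; 1; 0; 2; 2; 0; 2; 0; 2; 2; 0; 2; 0; 0; 0; 2];
     [:: 1; 1; 1; 0; 0; 0; 1; 0; 1; 2; 0; 1; 2; 0; 2; 0]];
  [:: [:: 0; 0; 1; 2; 0; 2; 2; 0; 1; 2; 0; 0; 2; 2; 0; 2];
     [:: 0; 0; 1; 1; 0; 2; 2; 0; 0; 0; 1; 2; 1; 0; 1; 1];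
     [:: 0; 0; 1; 1; 0; 2; 1; 0; 2; 2; 2; 0; 2; 1; 0; 0];
     [:: 0; 0; 1; 1; 0; 1; 1; 0; 1; 0; 1; 1; 0; 0; 1; 2];
     [:: 0; 1; 2; 1; 0; 2; 0; 1; 1; 0; 2; 0; 1; 0; 0; 2];
     [:: 0; 1; 0; 2; 0; 2; 1; 2; 2; 0; 1; 0; 1; 0; 0; 2];
     [:: 0; 1; 0; 2; 1; 1; 0; 1; 0; 2; 0; 2; 0; 1; 1; 0];
     [:: 1; 2; 0; 0; 2; 0; 0; 1; 0; 0; 1; 2; 0; 1; 2; 2];
     [:: 1; 2; 0; 0; 1; 0; 0; 2; 0; 1; 2; 2; 0; 0; 1; 2];
     [:: 1; 2; 0; 0; 1; 0; 0; 1; 2; 2; 0; 1; 1; 2; 0; 0];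
     [:: 1; 0; 2; 0; 2; 0; 2; 2; 0; 2; 0; 1; 0; 1; 1; 0];
     [:: 1; 0; 2; 0; 1; 2; 1; 0; 1; 0; 1; 0; 2; 0; 0; 1];
     [:: 1; 0; 1; 2; 2; 0; 1; 0; 1; 0; 2; 0; 1; 0; 0; 1];
     [:: 1; 1; 0; 0; 2; 0; 0; 1; 2; 1; 0; 0; 2; 2; 1; 0];
     [:: 1; 1; 0; 1; 0; 1; 0; 2; 0; 2; 0; 2; 0; 2; 2; 0];
     [:: 1; 1; 1; 0; 1; 0; 2; 0; 0; 1; 0; 1; 0; 1; 2; 0]];
  [:: [:: 0; 1; 2; 1; 2; 0; 0; 2; 2; 0; 1; 2; 0; 0; 1; 0];
     [:: 0; 1; 0; 0; 2; 2; 2; 0; 1; 1; 0; 0; 1; 0; 2; 1];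
     [:: 0; 1; 0; 0; 2; 1; 2; 0; 0; 2; 2; 1; 2; 2; 0; 0];
     [:: 0; 1; 0; 0; 1; 2; 2; 0; 0; 0; 2; 2; 2; 1; 0; 2];
     [:: 0; 1; 0; 0; 1; 2; 1; 0; 2; 2; 0; 0; 0; 2; 2; 1];
     [:: 0; 1; 1; 0; 2; 0; 1; 1; 0; 2; 0; 0; 1; 1; 0; 2];
     [:: 0; 1; 1; 0; 1; 1; 0; 2; 0; 1; 0; 0; 1; 2; 0; 2];
     [:: 1; 2; 1; 0; 2; 0; 0; 2; 2; 0; 2; 2; 0; 0; 2; 0];
     [:: 1; 0; 2; 2; 0; 0; 0; 2; 1; 2; 1; 0; 0; 0; 2; 2];
     [:: 1; 0; 2; 2; 0; 0; 0; 1; 0; 0; 2; 2; 1; 2; 1; 0];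
     [:: 1; 0; 2; 1; 0; 0; 0; 1; 2; 1; 0; 1; 0; 0; 2; 2];
     [:: 1; 0; 0; 1; 0; 2; 1; 2; 1; 0; 2; 1; 0; 0; 1; 0];
     [:: 1; 0; 0; 1; 1; 1; 2; 0; 0; 2; 0; 0; 1; 1; 0; 1];
     [:: 1; 0; 1; 2; 0; 2; 2; 0; 2; 0; 1; 1; 0; 0; 1; 0];
     [:: 1; 0; 1; 1; 0; 0; 0; 1; 1; 0; 1; 2; 2; 2; 0; 0];
     [:: 1; 1; 0; 2; 0; 1; 1; 0; 0; 1; 0; 0; 2; 1; 0; 1]];
  [:: [:: 0; 0; 0; 1; 1; 1; 1; 2; 0; 1; 1; 2; 2; 0; 0; 0];
     [:: 0; 0; 1; 0; 2; 2; 1; 2; 2; 0; 0; 0; 0; 2; 1; 1];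
     [:: 0; 1; 0; 2; 0; 0; 2; 2; 1; 0; 1; 1; 2; 0; 0; 1];
     [:: 0; 1; 0; 2; 0; 0; 1; 2; 0; 2; 2; 2; 0; 1; 2; 0];
     [:: 0; 1; 0; 0; 1; 2; 1; 1; 0; 1; 2; 1; 2; 0; 0; 0];
     [:: 0; 1; 0; 1; 0; 0; 2; 2; 0; 1; 2; 0; 1; 1; 1; 0];
     [:: 0; 1; 0; 1; 0; 0; 2; 1; 2; 2; 0; 2; 2; 0; 0; 1];
     [:: 1; 2; 2; 2; 1; 0; 0; 0; 2; 0; 0; 0; 0; 1; 1; 1];
     [:: 1; 2; 1; 1; 0; 2; 0; 0; 1; 0; 0; 0; 0; 1; 2; 1];
     [:: 1; 0; 2; 0; 2; 2; 0; 0; 1; 0; 0; 2; 2; 0; 1; 2];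
     [:: 1; 0; 2; 0; 2; 1; 0; 0; 0; 1; 2; 0; 0; 2; 2; 1];
     [:: 1; 0; 0; 0; 1; 2; 2; 2; 2; 0; 0; 0; 0; 2; 2; 2];
     [:: 1; 0; 1; 0; 2; 1; 0; 0; 2; 0; 0; 1; 2; 1; 0; 2];
     [:: 1; 0; 1; 0; 1; 1; 0; 0; 1; 2; 2; 0; 0; 2; 1; 0];
     [:: 1; 1; 2; 1; 0; 0; 1; 0; 0; 2; 1; 1; 1; 0; 0; 0];
     [:: 1; 1; 1; 2; 0; 0; 0; 1; 0; 1; 1; 2; 1; 0; 0; 0]];
  [:: [:: 0; 0; 1; 1; 2; 1; 0; 2; 1; 2; 2; 0; 0; 1; 0; 0];
     [:: 0; 0; 1; 1; 1; 2; 1; 0; 0; 0; 0; 1; 1; 0; 2; 2];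
     [:: 0; 1; 2; 0; 0; 2; 0; 2; 1; 0; 2; 0; 2; 2; 2; 0];
     [:: 0; 1; 2; 0; 0; 1; 0; 2; 0; 1; 1; 1; 0; 1; 0; 2];
     [:: 0; 1; 2; 0; 0; 1; 0; 1; 2; 2; 2; 0; 1; 0; 2; 0];
     [:: 0; 1; 1; 2; 2; 2; 0; 0; 2; 1; 2; 0; 0; 1; 0; 0];
     [:: 0; 1; 1; 0; 0; 1; 0; 1; 1; 1; 0; 1; 0; 2; 0; 1];
     [:: 1; 2; 2; 0; 0; 0; 1; 1; 1; 1; 2; 0; 0; 1; 0; 0];
     [:: 1; 2; 0; 2; 0; 0; 2; 2; 0; 0; 0; 1; 1; 0; 2; 1];
     [:: 1; 0; 0; 2; 2; 0; 1; 0; 0; 2; 0; 1; 0; 2; 1; 2];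
     [:: 1; 0; 0; 1; 2; 0; 2; 0; 0; 1; 0; 2; 1; 2; 0; 2];
     [:: 1; 0; 0; 1; 2; 0; 1; 0; 2; 0; 1; 0; 2; 0; 2; 1];
     [:: 1; 0; 0; 1; 1; 0; 2; 0; 2; 0; 2; 1; 2; 0; 1; 0];
     [:: 1; 0; 1; 2; 1; 1; 0; 0; 0; 0; 0; 2; 2; 0; 2; 2];
     [:: 1; 1; 0; 0; 0; 2; 2; 1; 1; 2; 1; 0; 0; 1; 0; 0];
     [:: 1; 1; 0; 0; 1; 0; 1; 2; 0; 0; 0; 2; 1; 0; 1; 1]];
  [:: [:: 0; 0; 1; 0; 2; 0; 2; 1; 0; 1; 1; 0; 2; 1; 0; 1];
     [:: 0; 0; 1; 0; 2; 0; 1; 2; 0; 2; 1; 2; 2; 0; 0; 2];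
     [:: 0; 0; 1; 0; 2; 0; 1; 1; 2; 0; 2; 1; 0; 2; 2; 0];
     [:: 0; 0; 1; 0; 1; 0; 2; 1; 2; 0; 0; 2; 0; 2; 1; 2];
     [:: 0; 1; 2; 0; 2; 2; 2; 0; 0; 0; 1; 1; 0; 2; 0; 2];
     [:: 0; 1; 2; 0; 0; 1; 1; 1; 0; 0; 1; 2; 0; 2; 0; 1];
     [:: 0; 1; 1; 2; 0; 1; 2; 0; 1; 2; 0; 0; 1; 0; 2; 0];
     [:: 1; 2; 2; 0; 0; 1; 2; 0; 2; 2; 0; 0; 2; 0; 2; 0];
     [:: 1; 2; 0; 2; 0; 2; 0; 0; 1; 1; 0; 2; 0; 2; 2; 0];
     [:: 1; 2; 0; 1; 2; 0; 0; 1; 1; 2; 0; 0; 1; 0; 1; 0];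
     [:: 1; 0; 0; 2; 2; 1; 0; 2; 2; 1; 0; 0; 1; 0; 1; 0];
     [:: 1; 0; 0; 2; 1; 0; 1; 1; 0; 0; 1; 1; 0; 1; 0; 2];
     [:: 1; 0; 1; 1; 1; 0; 0; 2; 0; 0; 1; 1; 0; 2; 0; 1];
     [:: 1; 1; 0; 2; 0; 2; 0; 0; 0; 2; 2; 0; 2; 0; 1; 1];
     [:: 1; 1; 0; 1; 0; 2; 0; 0; 2; 0; 0; 2; 1; 1; 2; 0];
     [:: 1; 1; 0; 1; 0; 1; 0; 0; 1; 1; 2; 0; 2; 0; 0; 2]];
  [:: [:: 0; 0; 1; 2; 0; 1; 1; 1; 0; 1; 2; 0; 0; 0; 1; 2];
     [:: 0; 0; 1; 2; 1; 0; 2; 2; 2; 0; 0; 2; 1; 1; 0; 0];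
     [:: 0; 1; 2; 2; 0; 0; 2; 1; 2; 0; 0; 1; 2; 1; 0; 0];
     [:: 0; 1; 2; 1; 1; 0; 0; 0; 2; 1; 2; 2; 0; 2; 0; 0];
     [:: 0; 1; 1; 2; 2; 0; 0; 0; 0; 0; 0; 2; 2; 2; 2; 1];
     [:: 0; 1; 1; 1; 2; 0; 0; 0; 2; 1; 1; 1; 1; 0; 0; 0];
     [:: 0; 1; 1; 1; 1; 0; 0; 0; 1; 0; 0; 0; 2; 1; 1; 1];
     [:: 1; 2; 0; 0; 2; 2; 2; 0; 0; 1; 2; 0; 0; 0; 1; 1];
     [:: 1; 2; 0; 0; 1; 1; 0; 1; 0; 1; 1; 0; 0; 0; 2; 1];
     [:: 1; 0; 0; 0; 0; 2; 1; 2; 0; 1; 0; 0; 2; 1; 2; 2];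
     [:: 1; 0; 0; 0; 0; 2; 1; 1; 2; 2; 1; 2; 0; 0; 1; 0];
     [:: 1; 0; 0; 0; 0; 1; 2; 2; 0; 0; 1; 0; 2; 2; 1; 2];
     [:: 1; 0; 0; 0; 0; 1; 1; 2; 2; 2; 2; 1; 0; 0; 0; 1];
     [:: 1; 0; 1; 1; 0; 0; 2; 1; 0; 2; 2; 0; 0; 0; 2; 2];
     [:: 1; 1; 2; 0; 2; 1; 0; 0; 1; 0; 0; 2; 1; 1; 0; 0];
     [:: 1; 1; 0; 2; 1; 2; 0; 0; 1; 0; 0; 1; 1; 2; 0; 0]]
]%N.

Definition allchk := all rows_ok datal && all wchk datal &&
  all (fun a => all (fun b => (a == b) || uchk a b) datal) datal && uniq datal.

Lemma allchk_true : allchk = true.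
Proof. vm_compute. reflexivity. Qed.

Lemma exist15 : exists S, MUWM 16 9 S /\ size S = 15%N.
Proof.
have /andP [/andP [/andP [hr hw] hu] hq] : allchk by rewrite allchk_true.
move/allP: hr => hr; move/allP: hw => hw; move/allP: hu => hu.
have neq a b : a \in datal -> b \in datal -> a != b -> uchk a b.
  move=> ha hb nab; move/allP: (hu a ha) => /(_ b hb); by rewrite (negbTE nab).
exists (map mxd datal); split; last by rewrite size_map.
split; [|split].
- rewrite map_inj_in_uniq // => a b ha hb eab; apply/eqP/negPn/negP => nab.
  have := uchk_ent (@ord0 15) (@ord0 15) (hr a ha) (hr b hb) (neq a b ha hb nab).
  rewrite -eab.
  have /andP [_ /allP hwa] := hw a ha.
  rewrite mxd_mul ?hr //.
  have h0 : (0%N \in iota 0 16) by [].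
  move: (hwa 0%N h0) => /allP /(_ 0%N h0) /= /eqP ->.
  rewrite mxE; move: (toZ_val (nth 0%N (nth [::] (vd a b) 0) 0)) => [->|[->|->]] //.
- move=> W /mapP [a ha ->]; exact: wchk_ok (hw a ha).
- move=> W1 W2 /mapP [a ha ->] /mapP [b hb ->] nW.
  apply: uchk_ok; rewrite ?hr //; apply: neq => //.
  by apply: contraNneq nW => ->.
Qed.

Local Close Scope ring_scope.

Theorem proposition6p6 : Wmax_is 16 9 15.
Proof.
split; [exact: exist15 | exact: upper].
Qed.
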